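(* Let $T$ be the weighted shift $Te_n=a_ne_{n+1}$ with a bounded sequence of nonzero weights. Then $\mathcal A_T$ is a (non-unital) integral domain: if $R,S\in\mathcal A_T$ are nonzero, then $RS\ne0$. Consequently, if $T$ is moreover quasinilpotent, every nonzero element of $\mathcal A_T$ is quasinilpotent but not nilpotent.
   Context: $H$ is a complex Hilbert space with orthonormal basis $\{e_n\}_{n\ge0}$, $(a_n)_{n\ge0}$ is a bounded sequence of nonzero complex numbers, $Te_n=a_ne_{n+1}$, and $\mathcal A_T$ is the operator-norm closure in $\mathcal B(H)$ of the polynomials $p(T)$ with $p(0)=0$. *)

(* Defs.v *)
From HB Require Import structures.
From mathcomp Require Import all_boot all_order all_algebra.
From mathcomp Require Import all_classical all_reals all_analysis.
From mathcomp Require Import complex.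
Set Implicit Arguments. Unset Strict Implicit. Unset Printing Implicit Defensive.
Import Order.TTheory GRing.Theory Num.Theory numFieldNormedType.Exports.
Local Open Scope ring_scope.

(* H is modelled as l^2(N, C): e_n is the n-th coordinate vector. *)
Section L2.
Variable R : realType.
Local Notation C := (R[i]).

Definition sqmod (z : C) : R := (complex.Re z) ^+ 2 + (complex.Im z) ^+ 2.

Definition vec := nat -> C.

Definition l2 (x : vec) : Prop := cvgn (series (fun n => sqmod (x n) : R)).

Definition l2norm (x : vec) : R := Num.sqrt (limn (series (fun n => sqmod (x n) : R))).

Definition vsub (x y : vec) : vec := fun n => x n - y n.

(* operators are maps on sequences; only their action on l2 is relevant *)
Definition op := vec -> vec.

Definition bounded_op (A : op) : Prop :=
  [/\ forall x, l2 x -> l2 (A x),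
      forall (c : C) x y, l2 x -> l2 y ->
        A (fun n => c * x n + y n) = (fun n => c * A x n + A y n)
    & exists M : R, forall x, l2 x -> l2norm (A x) <= M * l2norm x].

Definition op_zero (A : op) : Prop := forall x, l2 x -> A x = (fun _ => 0).

Definition op_mul (A B : op) : op := fun x => A (B x).

Definition op_invertible (A : op) : Prop :=
  exists B : op, bounded_op B /\
    forall x, l2 x -> B (A x) = x /\ A (B x) = x.

(* sigma(A) = {0}  (spectrum is nonempty in B(H)) ; i.e. lambda - A is
   invertible for every lambda <> 0 *)
Definition quasinilpotent (A : op) : Prop :=
  forall lam : C, lam != 0 -> op_invertible (fun x n => lam * x n - A x n).

Definition nilpotent (A : op) : Prop :=
  exists k : nat, op_zero (fun x => iter k.+1 A x).

Definition wshift (a : nat -> C) : op :=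
  fun x n => if n is m.+1 then a m * x m else 0.

Definition poly_op (A : op) (p : {poly C}) : op :=
  fun x n => \sum_(i < size p) p`_i * iter i A x n.

Definition in_AT (T : op) (A : op) : Prop :=
  bounded_op A /\
  forall eps : R, 0 < eps -> exists p : {poly C}, p.[0] = 0 /\
    forall x, l2 x -> l2norm (vsub (A x) (poly_op T p x)) <= eps * l2norm x.

End L2.

(* Main.v *)
Require Import Defs.
From HB Require Import structures.
From mathcomp Require Import all_boot all_order all_algebra.
From mathcomp Require Import all_classical all_reals all_analysis.
From mathcomp Require Import complex.
From mathcomp Require Import ring lra zify.
Import Order.TTheory GRing.Theory Num.Theory numFieldNormedType.Exports.
Local Open Scope ring_scope.
Set Implicit Arguments. Unset Strict Implicit.
Section S. Variable R : realType. Local Notation C := (R[i]). Implicit Types x y : vec R.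

Lemma sqmod_ge0 (z : C) : 0 <= sqmod z.
Proof. by rewrite /sqmod addr_ge0 // sqr_ge0. Qed.

Definition ps x N : R := \sum_(k < N) sqmod (x k).

Lemma ps_nd x : nondecreasing_seq (ps x).
Proof.
apply/nondecreasing_seqP => n; rewrite /ps big_ord_recr /= lerDl; exact: sqmod_ge0.
Qed.

Definition L2 x : R := limn (series (fun n => sqmod (x n) : R)).

Lemma seriesps x : series (fun n => sqmod (x n) : R) = ps x.
Proof. by rewrite seriesEord. Qed.

Lemma l2_partial x N : l2 x -> ps x N <= L2 x.
Proof.
rewrite /l2 /L2 seriesps => cx; exact: nondecreasing_cvgn_le (ps_nd x) cx N.
Qed.

Lemma l2_bound x B : (forall N, ps x N <= B) -> l2 x /\ L2 x <= B.
Proof.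
move=> hB.
have cx : cvgn (ps x).
  apply: nondecreasing_is_cvgn; first exact: ps_nd.
  by exists B => _ [n _ <-].
rewrite /l2 /L2 seriesps; split => //.
apply: limr_le => //; near=> n; exact: hB.
Unshelve. all: by end_near. Qed.

Lemma L2_ge0 x : l2 x -> 0 <= L2 x.
Proof. move=> h; apply: (le_trans _ (l2_partial 0%N h)); by rewrite /ps big_ord0. Qed.

Lemma l2normE x : l2norm x = Num.sqrt (L2 x).
Proof. by []. Qed.

Lemma coord_le x m : l2 x -> sqmod (x m) <= L2 x.
Proof.
move=> h; apply: (le_trans _ (l2_partial m.+1 h)).
rewrite /ps big_ord_recr /= lerDr sumr_ge0 // => i _; exact: sqmod_ge0.
Qed.

Lemma sqmodM (x y : C) : sqmod (x * y) = sqmod x * sqmod y.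
Proof. case: x => a b; case: y => c d; rewrite /sqmod /=. ring. Qed.

Lemma sqmodD (x y : C) : sqmod (x + y) = sqmod x + sqmod y + 2 * (complex.Re x * complex.Re y + complex.Im x * complex.Im y).
Proof. case: x => a b; case: y => c d; rewrite /sqmod /=. ring. Qed.

Lemma sqmodN (x : C) : sqmod (- x) = sqmod x.
Proof. case: x => a b; rewrite /sqmod /=. ring. Qed.

Lemma sqmod_eq0 (z : C) : sqmod z = 0 -> z = 0.
Proof.
case: z => a b; rewrite /sqmod /= => h.
have ha : a = 0 by nra.
have hb : b = 0 by nra.
by rewrite ha hb.
Qed.

Lemma sqmod_key (a b : R) (x y : C) :
  a * b * sqmod (x + y) <= (a + b) * (b * sqmod x + a * sqmod y).
Proof. case: x => p q; case: y => r s; rewrite /sqmod /=.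
have h1 : 0 <= (b * p - a * r) ^+ 2 by exact: sqr_ge0.
have h2 : 0 <= (b * q - a * s) ^+ 2 by exact: sqr_ge0. nra. Qed.

Lemma sqmod_2 (x y : C) : sqmod (x + y) <= 2 * (sqmod x + sqmod y).
Proof. case: x => p q; case: y => r s; rewrite /sqmod /=.
have h1 : 0 <= (p - r) ^+ 2 by exact: sqr_ge0.
have h2 : 0 <= (q - s) ^+ 2 by exact: sqr_ge0. nra. Qed.

Lemma sqmodV (z : C) : sqmod (z^-1) = (sqmod z)^-1.
Proof.
have [->|nz] := eqVneq z 0; first by rewrite invr0 /sqmod /= expr0n /= addr0 invr0.
apply: (@mulfI _ (sqmod z)); first by apply/eqP => /sqmod_eq0 /eqP; rewrite (negPf nz).
rewrite -sqmodM divrr ?unitfE // divrr ?unitfE //; first by rewrite /sqmod /= expr0n /= expr1n addr0.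
by apply/eqP => /sqmod_eq0 /eqP; rewrite (negPf nz).
Qed.

Lemma sqmod1 : sqmod (1 : C) = 1.
Proof. by rewrite /sqmod /= expr0n /= expr1n addr0. Qed.
Lemma sqmod0 : sqmod (0 : C) = 0.
Proof. by rewrite /sqmod /= expr0n /= addr0. Qed.
Definition vadd x y : vec R := fun m => x m + y m.
Definition vscale (c : C) x : vec R := fun m => c * x m.
Definition cabs (c : C) : R := Num.sqrt (sqmod c).
Definition vzero : vec R := fun _ => 0.

Lemma l2norm_ge0 x : 0 <= l2norm x.
Proof. exact: sqrtr_ge0. Qed.

Lemma l2normX x : l2 x -> l2norm x ^+ 2 = L2 x.
Proof. by move=> h; rewrite l2normE sqr_sqrtr // L2_ge0. Qed.

Lemma ps_le x N : l2 x -> ps x N <= l2norm x ^+ 2.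
Proof. by move=> h; rewrite l2normX //; exact: l2_partial. Qed.

Lemma coord_le2 x m : l2 x -> sqmod (x m) <= l2norm x ^+ 2.
Proof. by move=> h; rewrite l2normX //; exact: coord_le. Qed.

Lemma l2nb x (K : R) : 0 <= K -> (forall N, ps x N <= K ^+ 2) -> l2 x /\ l2norm x <= K.
Proof.
move=> K0 hN; have [h1 h2] := l2_bound hN; split => //.
have -> : K = Num.sqrt (K ^+ 2) by rewrite sqrtr_sqr ger0_norm.
by rewrite l2normE ler_sqrt // sqr_ge0.
Qed.

Lemma ps0 x : (forall m, x m = 0) -> forall N, ps x N = 0.
Proof. by move=> h N; rewrite /ps big1 // => i _; rewrite h sqmod0. Qed.

Lemma l2_zero : l2 vzero /\ l2norm vzero <= 0.
Proof. by apply: l2nb => // N; rewrite ps0 // expr0n. Qed.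

Lemma l2norm0_coord x m : l2 x -> l2norm x <= 0 -> x m = 0.
Proof.
move=> h h0; apply: sqmod_eq0; apply/eqP; rewrite eq_le sqmod_ge0 andbT.
apply: (le_trans (coord_le2 m h)).
have -> : l2norm x = 0 by apply/eqP; rewrite eq_le h0 l2norm_ge0.
by rewrite expr0n.
Qed.

Lemma l2_scale c x : l2 x -> l2 (vscale c x) /\ l2norm (vscale c x) <= cabs c * l2norm x.
Proof.
move=> h; apply: l2nb; first by rewrite mulr_ge0 ?sqrtr_ge0 ?l2norm_ge0.
move=> N; rewrite exprMn sqr_sqrtr ?sqmod_ge0 //.
rewrite /ps /vscale; under eq_bigr do rewrite sqmodM.
rewrite -mulr_sumr ler_wpM2l ?sqmod_ge0 //; exact: ps_le.
Qed.

Lemma l2_add x y : l2 x -> l2 y -> l2 (vadd x y) /\ l2norm (vadd x y) <= l2norm x + l2norm y.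
Proof.
move=> hx hy.
have [a0|apos] := eqVneq (l2norm x) 0.
  have -> : vadd x y = y.
    by apply: funext => m; rewrite /vadd (l2norm0_coord m hx) ?a0 // add0r.
  by rewrite a0 add0r.
have [b0|bpos] := eqVneq (l2norm y) 0.
  have -> : vadd x y = x.
    by apply: funext => m; rewrite /vadd (l2norm0_coord m hy) ?b0 // addr0.
  by rewrite b0 addr0.
set a := l2norm x in apos *; set b := l2norm y in bpos *.
have a0 : 0 < a by rewrite lt_def apos l2norm_ge0.
have b0 : 0 < b by rewrite lt_def bpos l2norm_ge0.
apply: l2nb; first by rewrite addr_ge0 ?l2norm_ge0.
move=> N.
have ab0 : 0 < a * b by rewrite mulr_gt0.
rewrite -(ler_pM2l ab0).
have e1 : a * b * ps (vadd x y) N <= (a + b) * (b * ps x N + a * ps y N).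
  rewrite /ps mulr_sumr mulr_sumr mulr_sumr -big_split mulr_sumr /=.
  apply: ler_sum => i _; exact: sqmod_key.
apply: (le_trans e1).
have hx2 := ps_le N hx; have hy2 := ps_le N hy.
rewrite -/a in hx2; rewrite -/b in hy2.
rewrite (_ : a * b * (a + b) ^+ 2 = (a + b) * (b * a ^+ 2 + a * b ^+ 2)); last by ring.
apply: ler_wpM2l; first by rewrite addr_ge0 ?ltW.
by apply: lerD; apply: ler_wpM2l => //; exact: ltW.
Qed.

Definition vsum (F : nat -> vec R) n : vec R := fun m => \sum_(r < n) F r m.

Lemma l2_vsum (F : nat -> vec R) n : (forall r, (r < n)%N -> l2 (F r)) ->
  l2 (vsum F n) /\ l2norm (vsum F n) <= \sum_(r < n) l2norm (F r).
Proof.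
elim: n => [|n IH] h.
  have -> : vsum F 0 = vzero by apply: funext => m; rewrite /vsum big_ord0.
  by rewrite big_ord0; exact: l2_zero.
have [h1 h2] := IH (fun r hr => h r (ltnW hr)).
have hn := h n (ltnSn n).
have -> : vsum F n.+1 = vadd (vsum F n) (F n).
  by apply: funext => m; rewrite /vsum /vadd big_ord_recr.
have [h3 h4] := l2_add h1 hn; split => //.
rewrite big_ord_recr /=; apply: (le_trans h4); rewrite lerD2r //.
Qed.
Section Shift.
Variable a : nat -> C.

Definition w n k : C := \prod_(t < k) a (n + t).

Lemma wS n k : w n k.+1 = w n k * a (n + k).
Proof. by rewrite /w big_ord_recr. Qed.

Lemma w0 n : w n 0 = 1.
Proof. by rewrite /w big_ord0. Qed.

Local Notation T := (wshift a).

Definition opp (p : {poly C}) x : vec R :=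
  fun m => \sum_(j < m.+1) x j * p`_(m - j) * w j (m - j).

Lemma opp_add p q x m : opp (p + q) x m = opp p x m + opp q x m.
Proof. rewrite /opp -big_split; apply: eq_bigr => j _; rewrite coefD /=; ring. Qed.

Lemma opp_scale c p x m : opp (c *: p) x m = c * opp p x m.
Proof. by rewrite /opp mulr_sumr; apply: eq_bigr => j _; rewrite coefZ; ring. Qed.

Lemma opp_zero x m : opp 0 x m = 0.
Proof. by rewrite /opp big1 // => j _; rewrite coef0 mulr0 mul0r. Qed.

Lemma opp_sum n (F : nat -> {poly C}) x m :
  opp (\sum_(i < n) F i) x m = \sum_(i < n) opp (F i) x m.
Proof.
elim: n => [|n IH]; first by rewrite !big_ord0 opp_zero.
by rewrite !big_ord_recr /= opp_add IH.
Qed.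

Lemma opp_muln p k x m : opp (p *+ k) x m = opp p x m *+ k.
Proof.
elim: k => [|k IH]; first by rewrite !mulr0n opp_zero.
by rewrite !mulrS opp_add IH.
Qed.

Lemma opp1 x : opp 1 x = x.
Proof.
apply: funext => m; rewrite /opp big_ord_recr /= subnn coef1 eqxx w0 mulr1 mulr1.
rewrite big1 ?add0r // => j _.
by rewrite coef1 subn_eq0 leqNgt ltn_ord /= mulr0 mul0r.
Qed.

Lemma oppXM q x : opp ('X * q) x = T (opp q x).
Proof.
apply: funext => -[|m].
  by rewrite /opp /wshift big_ord_recr big_ord0 /= coefXM /= mulr0 mul0r add0r.
rewrite /opp /wshift big_ord_recr /= subnn coefXM eqxx mulr0 mul0r addr0.
rewrite mulr_sumr; apply: eq_bigr => j _.
have hj : (j <= m)%N by rewrite -ltnS ltn_ord.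
rewrite subSn // coefXM /= wS subnKC //; ring.
Qed.

Lemma oppXnM i q x : opp ('X^i * q) x = iter i T (opp q x).
Proof.
elim: i => [|i IH]; first by rewrite expr0 mul1r.
by rewrite exprS -mulrA oppXM IH.
Qed.

Lemma opp_iter p y : opp p y = fun m => \sum_(i < size p) p`_i * iter i T y m.
Proof.
apply: funext => m.
rewrite -{1}(coefK p) poly_def.
transitivity (\sum_(i < size p) opp (p`_i *: 'X^i) y m); first exact: (@opp_sum (size p) (fun i : nat => p`_i *: 'X^i) y m).
apply: eq_bigr => i _.
by rewrite opp_scale -(mulr1 ('X^i)) oppXnM opp1.
Qed.

Lemma poly_op_opp p y : poly_op T p y = opp p y.
Proof. by rewrite opp_iter. Qed.

Lemma oppM p q x : opp (p * q) x = opp p (opp q x).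
Proof.
apply: funext => m.
rewrite [in RHS]opp_iter -{1}(coefK p) poly_def mulr_suml.
transitivity (\sum_(i < size p) opp ((p`_i *: 'X^i) * q) x m); first exact: (@opp_sum (size p) (fun i : nat => (p`_i *: 'X^i) * q) x m).
apply: eq_bigr => i _; by rewrite -scalerAl opp_scale oppXnM.
Qed.

Lemma oppX k p x : opp (p ^+ k) x = iter k (opp p) x.
Proof.
elim: k => [|k IH]; first by rewrite expr0 opp1.
by rewrite exprS oppM IH.
Qed.


Definition ev n : vec R := fun k => if k == n then 1 else 0.

Lemma ps_ev n N : ps (ev n) N <= 1.
Proof.
have : ps (ev n) N = if (n < N)%N then 1 else 0.
  elim: N => [|N IH]; first by rewrite /ps big_ord0.
  rewrite /ps big_ord_recr /= -/(ps (ev n) N) IH /ev.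
  case: (eqVneq N n) => [->|nN]; first by rewrite ltnn ltnSn sqmod1 add0r.
  by rewrite sqmod0 addr0 ltnS [in RHS]leq_eqVlt eq_sym (negPf nN).
by move=> ->; case: ifP.
Qed.

Lemma l2_ev n : l2 (ev n) /\ l2norm (ev n) <= 1.
Proof. apply: l2nb => // N; rewrite expr1n; exact: ps_ev. Qed.

Lemma l2_dom x y : l2 x -> (forall m, sqmod (y m) <= sqmod (x m)) ->
  l2 y /\ l2norm y <= l2norm x.
Proof.
move=> hx hd; apply: l2nb; first exact: l2norm_ge0.
move=> N; apply: le_trans (ps_le N hx); apply: ler_sum => i _; exact: hd.
Qed.

Lemma iterT_lo i x m : (m < i)%N -> iter i T x m = 0.
Proof.
elim: i m => [|i IH] [|m] //= h; rewrite /wshift IH ?mulr0 //.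
Qed.

Lemma iterT_hi i x m : iter i T x (m + i)%N = w m i * x m.
Proof.
elim: i m => [|i IH] m; first by rewrite addn0 /= w0 mul1r.
by rewrite /= addnS /wshift IH wS; ring.
Qed.

Lemma ps_shift i x (V : R) N : 0 <= V -> (forall m, sqmod (w m i) <= V) ->
  ps (iter i T x) N <= V * ps x (N - i).
Proof.
move=> V0 hV; elim: N => [|N IH]; first by rewrite /ps !big_ord0 mulr0.
rewrite /ps big_ord_recr /= -/(ps _ N).
case: (ltnP N i) => hN.
  rewrite iterT_lo // sqmod0 addr0.
  have -> : (N.+1 - i = N - i)%N by lia.
  exact: IH.
have e : N = (N - i + i)%N by rewrite subnK.
rewrite subSn // /ps big_ord_recr /= -/(ps x (N - i)) mulrDr.
apply: lerD => //.
rewrite {1}e iterT_hi sqmodM ler_wpM2r ?sqmod_ge0 //.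
Qed.

Lemma shift_bound i x (V : R) : l2 x -> 0 <= V -> (forall m, sqmod (w m i) <= V) ->
  l2 (iter i T x) /\ l2norm (iter i T x) <= Num.sqrt V * l2norm x.
Proof.
move=> hx V0 hV; apply: l2nb; first by rewrite mulr_ge0 ?sqrtr_ge0 ?l2norm_ge0.
move=> N; rewrite exprMn sqr_sqrtr //; apply: (le_trans (ps_shift x N V0 hV)).
rewrite ler_wpM2l //; exact: ps_le.
Qed.

Variable M0 : R.
Hypothesis hM : forall n, sqmod (a n) <= M0.

Lemma M0_ge0 : 0 <= M0.
Proof. exact: le_trans (sqmod_ge0 _) (hM 0). Qed.

Lemma w_bound m i : sqmod (w m i) <= M0 ^+ i.
Proof.
elim: i => [|i IH]; first by rewrite w0 sqmod1 expr0.
rewrite wS sqmodM exprSr ler_pM ?sqmod_ge0 //.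
Qed.

Definition Kp (p : {poly C}) : R := \sum_(i < size p) cabs p`_i * Num.sqrt (M0 ^+ i).

Lemma Kp_ge0 p : 0 <= Kp p.
Proof. by apply: sumr_ge0 => i _; rewrite mulr_ge0 ?sqrtr_ge0. Qed.

Lemma opp_bound p x : l2 x -> l2 (opp p x) /\ l2norm (opp p x) <= Kp p * l2norm x.
Proof.
move=> hx.
have -> : opp p x = vsum (fun i => vscale p`_i (iter i T x)) (size p).
  by rewrite opp_iter.
have hT i : l2 (iter i T x) /\ l2norm (iter i T x) <= Num.sqrt (M0 ^+ i) * l2norm x.
  apply: shift_bound => //; first exact: exprn_ge0 M0_ge0.
  by move=> m; exact: w_bound.
have [h1 h2] := l2_vsum (F := fun i => vscale p`_i (iter i T x)) (n := size p)
   (fun r _ => (l2_scale p`_r (hT r).1).1).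
split => //; apply: (le_trans h2); rewrite /Kp mulr_suml; apply: ler_sum => i _.
have [_ h3] := l2_scale p`_i (hT i).1.
apply: (le_trans h3); rewrite -mulrA ler_wpM2l ?sqrtr_ge0 //; exact: (hT i).2.
Qed.

Lemma iter_opp_bound p j y : l2 y ->
  l2 (iter j (opp p) y) /\ l2norm (iter j (opp p) y) <= Kp p ^+ j * l2norm y.
Proof.
move=> hy; elim: j => [|j [IH1 IH2]]; first by rewrite expr0 mul1r.
have [h1 h2] := opp_bound p IH1; split => //=.
apply: (le_trans h2); rewrite exprS -mulrA ler_wpM2l //; exact: Kp_ge0.
Qed.

End Shift.

Lemma sq_le (u v : R) : 0 <= u -> u <= v -> u ^+ 2 <= v ^+ 2.
Proof. by move=> u0 uv; rewrite !expr2 ler_pM. Qed.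

Lemma small0 (z : C) (K : R) : 0 <= K -> (forall e : R, 0 < e -> sqmod z <= e ^+ 2 * K) -> z = 0.
Proof.
move=> K0 H; apply: sqmod_eq0; apply/eqP; rewrite eq_le sqmod_ge0 andbT.
rewrite leNgt; apply/negP => s0; set s := sqmod z in s0 H.
have K1 : 0 < 2 * (K + 1) by rewrite mulr_gt0 // ltr_pwDr.
set t := s / (2 * (K + 1)).
have t0 : 0 < t by rewrite divr_gt0.
have h2 : s <= t * K.
  by have := H (Num.sqrt t); rewrite sqrtr_gt0 sqr_sqrtr; [move/(_ t0) | exact: ltW].
have ht : t * (2 * (K + 1)) = s by rewrite /t divfK // gt_eqF.
have tK : 0 <= t * K by apply: mulr_ge0 => //; exact: ltW.
clearbody t s; nra.
Qed.

Lemma l2_vsub x y : l2 x -> l2 y -> l2 (vsub x y).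
Proof.
move=> hx hy; have [h _] := l2_add hx (l2_scale (-1) hy).1.
by have -> : vsub x y = vadd x (vscale (-1) y) by apply: funext => m; rewrite /vsub /vadd /vscale mulN1r.
Qed.

Definition trunc j x : vec R := fun k => if (k < j)%N then x k else 0.
Definition tail j x : vec R := fun k => if (k < j)%N then 0 else x k.

Lemma l2_trunc j x : l2 x -> l2 (trunc j x).
Proof. move=> h; suff [] : l2 (trunc j x) /\ l2norm (trunc j x) <= l2norm x by [].
apply: l2_dom h _ => m; rewrite /trunc; case: ifP => _; by rewrite ?sqmod0 ?sqmod_ge0 ?lexx. Qed.
Lemma l2_tail j x : l2 x -> l2 (tail j x).
Proof. move=> h; suff [] : l2 (tail j x) /\ l2norm (tail j x) <= l2norm x by [].
apply: l2_dom h _ => m; rewrite /tail; case: ifP => _; by rewrite ?sqmod0 ?sqmod_ge0 ?lexx. Qed.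

Section AT.
Variable a : nat -> C.
Hypothesis ha0 : forall n, a n != 0.
Variable M0 : R.
Hypothesis hM : forall n, sqmod (a n) <= M0.
Local Notation T := (wshift a).
Variable S : op R.
Hypothesis hS : in_AT T S.

Lemma w_neq0 n k : w a n k != 0.
Proof. by rewrite /w prodf_seq_neq0; apply/allP => i _; exact: ha0. Qed.

Lemma S_l2 x : l2 x -> l2 (S x).
Proof. by case: hS => -[h _ _] _; exact: h. Qed.

Lemma S_lin (c : C) x y : l2 x -> l2 y ->
  S (fun n => c * x n + y n) = (fun n => c * S x n + S y n).
Proof. by case: hS => -[_ h _] _; exact: h. Qed.

Lemma S_approx e : 0 < e -> exists p : {poly C}, p`_0 = 0 /\
  forall x, l2 x -> forall m, sqmod (S x m - opp a p x m) <= e ^+ 2 * l2norm x ^+ 2.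
Proof.
move=> e0; case: hS => _ /(_ e e0) [p [hp0 hb]]; exists p; split; first by rewrite -horner_coef0.
move=> x hx m.
have hv : l2 (vsub (S x) (opp a p x)) by apply: l2_vsub; [exact: S_l2 | exact: (opp_bound hM p hx).1].
have := coord_le2 m hv; rewrite /vsub => h; apply: (le_trans h).
rewrite -exprMn; apply: sq_le; first exact: l2norm_ge0.
by have := hb x hx; rewrite poly_op_opp.
Qed.

Lemma opp_vanish (p : {poly C}) x j : p`_0 = 0 -> (forall k, (k < j)%N -> x k = 0) -> opp a p x j = 0.
Proof.
move=> hp hx; rewrite /opp big_ord_recr /= subnn hp mulr0 mul0r addr0.
by rewrite big1 // => k _; rewrite hx ?mul0r.
Qed.

Lemma S_vanish x j : l2 x -> (forall k, (k < j)%N -> x k = 0) -> S x j = 0.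
Proof.
move=> hx hv; apply: (small0 (K := l2norm x ^+ 2)); first exact: sqr_ge0.
move=> e e0; have [p [hp hb]] := S_approx e0.
by have := hb x hx j; rewrite opp_vanish // subr0.
Qed.

Lemma S_trunc x m j : l2 x -> S (trunc j x) m = \sum_(n < j) x n * S (ev n) m.
Proof.
move=> hx; elim: j => [|j IH].
  by rewrite big_ord0; apply: S_vanish; [exact: l2_trunc | move=> k _; rewrite /trunc].
have -> : trunc j.+1 x = fun k => x j * ev j k + trunc j x k.
  apply: funext => k; rewrite /trunc /ev ltnS leq_eqVlt.
  case: (eqVneq k j) => [->|kj] /=; first by rewrite ltnn mulr1 addr0.
  by rewrite mulr0 add0r.
rewrite S_lin; [|exact: (l2_ev j).1|exact: l2_trunc].
by rewrite /= big_ord_recr /= IH addrC.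
Qed.

Lemma S_coord x m : l2 x -> S x m = \sum_(n < m) x n * S (ev n) m.
Proof.
move=> hx.
have -> : x = fun k => 1 * tail m x k + trunc m x k.
  by apply: funext => k; rewrite /tail /trunc; case: ifP => _; rewrite ?mulr0 ?add0r ?mul1r ?addr0.
rewrite S_lin; [|exact: l2_tail|exact: l2_trunc].
rewrite /= mul1r (S_vanish (x := tail m x)); last by move=> k hk; rewrite /tail hk.
  rewrite add0r S_trunc //; apply: eq_bigr => n _; by rewrite /tail /trunc ltn_ord mulr0 add0r.
exact: l2_tail.
Qed.


Lemma opp_ev (p : {poly C}) n k : opp a p (ev n) (n + k)%N = p`_k * w a n k.
Proof.
have hn : (n < (n + k).+1)%N by rewrite ltnS leq_addr.
rewrite /opp (bigD1 (Ordinal hn)) //= /ev eqxx mul1r addKn big1 ?addr0 // => j hj.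
case: eqP => [e|]; last by rewrite !mul0r.
by exfalso; move/eqP: hj; apply; apply: val_inj.
Qed.

Lemma Se_low n m : (m <= n)%N -> S (ev n) m = 0.
Proof.
move=> hmn; apply: S_vanish; first exact: (l2_ev n).1.
by move=> k hk; rewrite /ev; case: eqP => // e; exfalso; lia.
Qed.

Lemma ev_sq e u : 0 <= e -> e ^+ 2 * l2norm (ev u) ^+ 2 <= e ^+ 2.
Proof.
move=> e0; rewrite -[X in _ <= X]mulr1 ler_wpM2l ?sqr_ge0 //.
rewrite -(expr1n _ 2); apply: sq_le; [exact: l2norm_ge0 | exact: (l2_ev u).2].
Qed.

Lemma Se_rel n k : S (ev n) (n + k)%N * w a 0 k = S (ev 0) k * w a n k.
Proof.
apply/eqP; rewrite -subr_eq0; apply/eqP.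
apply: (small0 (K := 2 * (sqmod (w a 0 k) + sqmod (w a n k)))).
  by rewrite mulr_ge0 // addr_ge0 ?sqmod_ge0.
move=> e e0; have [p [hp hb]] := S_approx e0.
have h1 := hb (ev n) (l2_ev n).1 (n + k)%N; rewrite opp_ev in h1.
have h2 := hb (ev 0) (l2_ev 0).1 k.
have E := opp_ev p 0 k; rewrite add0n in E; rewrite E in h2.
have g1 := le_trans h1 (ev_sq n (ltW e0)).
have g2 := le_trans h2 (ev_sq 0 (ltW e0)).
set d1 := S (ev n) (n + k)%N - p`_k * w a n k in g1 *.
set d2 := S (ev 0) k - p`_k * w a 0 k in g2 *.
have -> : S (ev n) (n + k)%N * w a 0 k - S (ev 0) k * w a n k = d1 * w a 0 k + - (d2 * w a n k).
  by rewrite /d1 /d2; ring.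
apply: (le_trans (sqmod_2 _ _)); rewrite sqmodN !sqmodM.
have f1 : 0 <= (e ^+ 2 - sqmod d1) * sqmod (w a 0 k) by rewrite mulr_ge0 ?subr_ge0 ?sqmod_ge0.
have f2 : 0 <= (e ^+ 2 - sqmod d2) * sqmod (w a n k) by rewrite mulr_ge0 ?subr_ge0 ?sqmod_ge0.
clearbody d1 d2; nra.
Qed.

Definition cS k : C := S (ev 0) k / w a 0 k.

Lemma Se_c n k : S (ev n) (n + k)%N = cS k * w a n k.
Proof. by rewrite /cS mulrAC -Se_rel mulfK // w_neq0. Qed.

Lemma cS0 : cS 0 = 0.
Proof. by rewrite /cS Se_low // mul0r. Qed.

Lemma Se_c' n m : (n <= m)%N -> S (ev n) m = cS (m - n) * w a n (m - n).
Proof. by move=> h; rewrite -Se_c subnKC. Qed.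

Lemma S_opp x m N : l2 x -> (m < N)%N -> S x m = opp a (\poly_(k < N) cS k) x m.
Proof.
move=> hx hmN; rewrite S_coord // /opp big_ord_recr /= subnn coef_poly.
rewrite (leq_ltn_trans (leq0n m) hmN) cS0 mulr0 mul0r addr0.
apply: eq_bigr => j _.
rewrite coef_poly (leq_ltn_trans (leq_subr j m) hmN) Se_c' ?mulrA //.
exact: ltnW (ltn_ord j).
Qed.

Lemma S_key (k0 : nat) : cS k0 != 0 -> (forall i, (i < k0)%N -> cS i = 0) ->
  forall y j, l2 y -> (forall i, (i < j)%N -> y i = 0) -> y j != 0 ->
   (forall m, (m < j + k0)%N -> S y m = 0) /\ S y (j + k0)%N != 0.
Proof.
move=> hk0 hmin y j hy hyj hyj0.
have k0pos : (0 < k0)%N.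
  by case: k0 hk0 hmin => [|//]; rewrite cS0 eqxx.
have zero_term m (n : nat) : (m < j + k0)%N -> (n < m)%N -> y n * S (ev n) m = 0.
  move=> hm hn; case: (ltnP n j) => hnj; first by rewrite hyj // mul0r.
  by rewrite Se_c' ?(ltnW hn) // hmin ?mul0r ?mulr0 //; lia.
split.
  move=> m hm; rewrite S_coord // big1 // => n _; exact: zero_term.
have hj : (j < j + k0)%N by rewrite -{1}(addn0 j) ltn_add2l.
rewrite S_coord // (bigD1 (Ordinal hj)) //= big1 ?addr0.
  by rewrite Se_c mulf_neq0 // mulf_neq0 // w_neq0.
move=> n hn; case: (ltnP n j) => hnj; first by rewrite hyj // mul0r.
have hnj' : (j < n)%N.
  rewrite ltn_neqAle hnj andbT; apply/eqP => e; move/eqP: hn; apply; exact: val_inj.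
rewrite Se_c' ?(ltnW (ltn_ord n)) // hmin ?mul0r ?mulr0 //; lia.
Qed.

Lemma S_nonzero : ~ op_zero S -> exists k0, cS k0 != 0 /\ forall i, (i < k0)%N -> cS i = 0.
Proof.
move=> hnz.
have [x hx hSx] : exists2 x, l2 x & S x <> (fun _ => 0).
  apply: contrapT => hc; apply: hnz => x hx; apply: contrapT => hne; apply: hc; by exists x.
have [m hm] : exists m, S x m != 0.
  apply: contrapT => hc; apply: hSx; apply: funext => m; apply/eqP.
  by apply: contrapT => hne; apply: hc; exists m; apply/negP.
have [n hn] : exists n : 'I_m, S (ev n) m != 0.
  apply: contrapT => hc; move/negP: hm; apply; rewrite S_coord // big1 // => n _.
  have -> : S (ev n) m = 0 by apply/eqP; apply: contrapT => hne; apply: hc; exists n; exact/negP.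
  by rewrite mulr0.
have hk : exists k, cS k != 0.
  exists (m - n)%N; apply/negP => /eqP e; move/negP: hn; apply.
  by rewrite Se_c' ?(ltnW (ltn_ord n)) // e mul0r.
case: (ex_minnP hk) => k0 hk0 hm0; exists k0; split => // i hi.
by apply/eqP; apply: contrapT => /negP hne; have := hm0 i hne; lia.
Qed.

End AT.

Lemma sqmodX (z : C) k : sqmod (z ^+ k) = sqmod z ^+ k.
Proof. by elim: k => [|k IH]; rewrite ?expr0 ?sqmod1 // !exprS sqmodM IH. Qed.

Lemma natC_ReIm n : complex.Re (n%:R : C) = n%:R /\ complex.Im (n%:R : C) = 0.
Proof.
elim: n => [|n [h1 h2]]; first by [].
rewrite -addn1 !natrD; move: h1 h2; case: (n%:R : C) => u v /= -> ->.
by rewrite addr0.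
Qed.

Lemma cabs_nat n : cabs (n%:R : C) = n%:R.
Proof.
have [h1 h2] := natC_ReIm n.
by rewrite /cabs /sqmod h1 h2 expr0n /= addr0 sqrtr_sqr ger0_norm.
Qed.

Lemma sqmod_cabs (z : C) : sqmod z = cabs z ^+ 2.
Proof. by rewrite /cabs sqr_sqrtr // sqmod_ge0. Qed.

Lemma cabsM (u v : C) : cabs (u * v) = cabs u * cabs v.
Proof. by rewrite /cabs sqmodM sqrtrM // sqmod_ge0. Qed.

Lemma cabsX (z : C) k : cabs (z ^+ k) = cabs z ^+ k.
Proof.
elim: k => [|k IH]; first by rewrite !expr0 /cabs sqmod1 sqrtr1.
by rewrite !exprS cabsM IH.
Qed.

Lemma cabsV (z : C) : cabs (z^-1) = (cabs z)^-1.
Proof. by rewrite /cabs sqmodV sqrtrV // sqmod_ge0. Qed.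

Lemma cabs_gt0 (z : C) : z != 0 -> 0 < cabs z.
Proof.
move=> nz; rewrite /cabs sqrtr_gt0 lt_def sqmod_ge0 andbT.
by apply/eqP => /sqmod_eq0 /eqP; rewrite (negPf nz).
Qed.

Section Res.
Variable a : nat -> C.
Local Notation T := (wshift a).

Lemma wshift_lo (y : vec R) n : (forall m, (m < n)%N -> y m = 0) -> T y n = 0.
Proof. by case: n => [|n] h //=; rewrite /wshift h ?mulr0. Qed.

Lemma w_res (qT : quasinilpotent T) (mu : R) : 0 < mu ->
  exists MB : R, 0 <= MB /\ forall n i, sqmod (w a n i) <= MB * (mu ^+ 2) ^+ i.+1.
Proof.
move=> mu0; set lam : C := Complex mu 0.
have lam0 : lam != 0.
  by apply/eqP => -[] /eqP; rewrite gt_eqF.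
have slam : sqmod lam = mu ^+ 2 by rewrite /sqmod /= expr0n /= addr0.
have [B [[hB1 _ [MB hMB]] hinv]] := qT lam lam0.
exists (`|MB| ^+ 2); split; first exact: sqr_ge0.
move=> n i.
have hev := (l2_ev n).1.
set y := B (ev n).
have hy : l2 y by exact: hB1.
have eqy m : lam * y m - T y m = ev n m.
  by have [_ h] := hinv _ hev; exact: (congr1 (fun f => f m) h).
have ylo m : (m < n)%N -> y m = 0.
  elim: m => [|m IH] hm.
    have := eqy 0%N; rewrite /ev /wshift subr0.
    have -> : (0 == n) = false by apply/negbTE; rewrite neq_ltn hm.
    by move/eqP; rewrite mulf_eq0 (negPf lam0) => /eqP.
  have := eqy m.+1; rewrite /ev /wshift IH ?(ltnW hm) // mulr0 subr0.
  have -> : (m.+1 == n) = false by apply/negbTE; rewrite neq_ltn hm.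
  by move/eqP; rewrite mulf_eq0 (negPf lam0) => /eqP.
have yhi k : y (n + k)%N = w a n k / lam ^+ k.+1.
  elim: k => [|k IH].
    have := eqy n; rewrite /ev eqxx (wshift_lo ylo) subr0 => h.
    by rewrite addn0 w0 expr1 -h [lam * _]mulrC mulfK.
  have := eqy (n + k).+1; rewrite /ev /wshift.
  have -> : ((n + k).+1 == n) = false by apply/negbTE; rewrite neq_ltn ltnS leq_addr orbT.
  rewrite IH => /eqP; rewrite subr_eq0 => /eqP e.
  rewrite addnS -[y _](mulKf lam0) e wS exprS.
  rewrite !exprS; have lk : lam ^+ k != 0 by rewrite expf_neq0.
  by field; rewrite ?lam0 ?lk.
have : sqmod (y (n + i)%N) <= `|MB| ^+ 2.
  apply: (le_trans (coord_le2 _ hy)); apply: sq_le; first exact: l2norm_ge0.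
  apply: (le_trans (hMB _ hev)); apply: (le_trans (ler_norm _)); rewrite normrM.
  rewrite -[X in _ <= X]mulr1 ler_wpM2l // ger0_norm ?l2norm_ge0 //; exact: (l2_ev n).2.
rewrite yhi sqmodM sqmodV sqmodX slam => h.
have hp : 0 < (mu ^+ 2) ^+ i.+1 by rewrite exprn_gt0 // exprn_gt0.
by rewrite -ler_pdivrMr.
Qed.

End Res.

Lemma opp_ext a (p : {poly C}) y z m : (forall j, (j <= m)%N -> y j = z j) ->
  opp a p y m = opp a p z m.
Proof. by move=> h; apply: eq_bigr => j _; rewrite h // -ltnS ltn_ord. Qed.

Lemma iter_opp_ext a (p : {poly C}) k y z m : (forall j, (j <= m)%N -> y j = z j) ->
  iter k (opp a p) y m = iter k (opp a p) z m.
Proof.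
move=> h; suff H : forall m', (m' <= m)%N -> iter k (opp a p) y m' = iter k (opp a p) z m'.
  exact: H.
elim: k => [|k IH] m' hm' /=; first exact: h.
apply: opp_ext => j hj; apply: IH; exact: leq_trans hj hm'.
Qed.

Lemma opp_sub a (p q : {poly C}) x m : opp a (p - q) x m = opp a p x m - opp a q x m.
Proof. by rewrite /opp -sumrB; apply: eq_bigr => j _; rewrite coefB /=; ring. Qed.

Section Pow.
Variable a : nat -> C.
Hypothesis ha0 : forall n, a n != 0.
Variable M0 : R.
Hypothesis hM : forall n, sqmod (a n) <= M0.
Local Notation T := (wshift a).
Variable A : op R.
Hypothesis hA : in_AT T A.
Variable p : {poly C}.
Variable d : R.
Hypothesis hpE : forall x, l2 x -> l2norm (vsub (A x) (poly_op T p x)) <= d * l2norm x.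
Hypothesis d0 : 0 <= d.

Definition cP N : {poly C} := \poly_(k < N) cS a A k.

Lemma Apow_l2 r x : l2 x -> l2 (iter r A x).
Proof. by move=> hx; elim: r => [|r IH] //=; exact: (S_l2 hA). Qed.

Lemma Apow_opp r x m N : l2 x -> (m < N)%N -> iter r A x m = opp a (cP N ^+ r) x m.
Proof.
move=> hx; elim: r m => [|r IH] m hm; first by rewrite expr0 opp1.
rewrite /= (S_opp ha0 hM hA (Apow_l2 (r := r) hx) hm) exprS oppM.
apply: opp_ext => j hj; apply: IH; exact: leq_ltn_trans hj hm.
Qed.

Definition Eop : op R := fun x m => A x m - opp a p x m.

Lemma Eop_vsub x : Eop x = vsub (A x) (poly_op T p x).
Proof. by rewrite poly_op_opp. Qed.

Lemma E_bound x : l2 x -> l2 (Eop x) /\ l2norm (Eop x) <= d * l2norm x.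
Proof.
move=> hx; rewrite Eop_vsub; split; last exact: hpE.
apply: l2_vsub; first exact: (S_l2 hA).
by rewrite poly_op_opp; exact: (opp_bound hM p hx).1.
Qed.

Lemma Epow_bound i x : l2 x -> l2 (iter i Eop x) /\ l2norm (iter i Eop x) <= d ^+ i * l2norm x.
Proof.
move=> hx; elim: i => [|i [h1 h2]]; first by rewrite expr0 mul1r.
have [h3 h4] := E_bound h1; split => //=.
apply: (le_trans h4); rewrite exprS -mulrA ler_wpM2l //.
Qed.

Lemma Epow_opp i x m N : l2 x -> (m < N)%N -> iter i Eop x m = opp a ((cP N - p) ^+ i) x m.
Proof.
move=> hx; elim: i m => [|i IH] m hm; first by rewrite expr0 opp1.
rewrite /= /Eop (S_opp ha0 hM hA (Epow_bound i hx).1 hm) exprS oppM.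
rewrite opp_sub.
by congr (_ - _); apply: opp_ext => j hj; apply: IH; exact: leq_ltn_trans hj hm.
Qed.

Lemma Apow_expand r x m : l2 x ->
  iter r A x m = \sum_(i < r.+1) (iter (r - i) (opp a p) (iter i Eop x) m) *+ 'C(r, i).
Proof.
move=> hx; set N := m.+1.
have hm : (m < N)%N by [].
rewrite (Apow_opp r hx hm).
have -> : cP N = p + (cP N - p) by rewrite addrC subrK.
rewrite exprDn.
transitivity (\sum_(i < r.+1) opp a (p ^+ (r - i) * (cP N - p) ^+ i *+ 'C(r, i)) x m).
  exact: (@opp_sum a r.+1 (fun i : nat => p ^+ (r - i) * (cP N - p) ^+ i *+ 'C(r, i)) x m).
apply: eq_bigr => i _; rewrite opp_muln oppM oppX; congr (_ *+ _).
apply: iter_opp_ext => j hj; rewrite (Epow_opp i hx (leq_ltn_trans hj hm)) //.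
Qed.


Variable q : {poly C}.
Hypothesis hpq : p = 'X * q.
Variables MB mu : R.
Hypothesis hMB : 0 <= MB.
Hypothesis hmu : 0 <= mu.
Hypothesis hW : forall n i, sqmod (w a n i) <= MB * (mu ^+ 2) ^+ i.+1.

Lemma Tpow_bound j z : l2 z ->
  l2 (iter j T z) /\ l2norm (iter j T z) <= Num.sqrt MB * mu ^+ j.+1 * l2norm z.
Proof.
move=> hz.
have hV : 0 <= MB * (mu ^+ 2) ^+ j.+1 by rewrite mulr_ge0 // exprn_ge0 // sqr_ge0.
have [h1 h2] := shift_bound hz hV (fun m => hW m j); split => //.
apply: (le_trans h2); rewrite sqrtrM // -exprM mulnC exprM sqrtr_sqr ger0_norm //.
exact: exprn_ge0.
Qed.

Lemma Ppow_eq j y : iter j (opp a p) y = iter j T (iter j (opp a q) y).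
Proof. by rewrite -oppX hpq exprMn oppXnM oppX. Qed.

Lemma Ppow_bound j y : l2 y -> l2 (iter j (opp a p) y) /\
  l2norm (iter j (opp a p) y) <= Num.sqrt MB * mu ^+ j.+1 * Kp M0 q ^+ j * l2norm y.
Proof.
move=> hy; rewrite Ppow_eq.
have [h1 h2] := iter_opp_bound hM q j hy.
have [h3 h4] := Tpow_bound j h1; split => //.
apply: (le_trans h4); rewrite -[X in _ <= X]mulrA; apply: ler_wpM2l => //.
by rewrite mulr_ge0 ?sqrtr_ge0 ?exprn_ge0.
Qed.

Lemma Apow_bound r x : l2 x ->
  l2norm (iter r A x) <= Num.sqrt MB * mu * l2norm x * (mu * Kp M0 q + d) ^+ r.
Proof.
move=> hx.
have -> : iter r A x = vsum (fun i => vscale ('C(r, i))%:R (iter (r - i) (opp a p) (iter i Eop x))) r.+1.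
  apply: funext => m; rewrite Apow_expand //; apply: eq_bigr => i _; by rewrite /vscale mulr_natl.
have hl i : l2 (iter (r - i) (opp a p) (iter i Eop x)) := (Ppow_bound (r - i) (Epow_bound i hx).1).1.
have [_ hb] := l2_vsum (F := fun i => vscale ('C(r, i))%:R (iter (r - i) (opp a p) (iter i Eop x)))
  (n := r.+1) (fun i _ => (l2_scale _ (hl i)).1).
apply: (le_trans hb); rewrite exprDn mulr_sumr; apply: ler_sum => i _.
have [_ h1] := l2_scale ('C(r, i))%:R (hl i); rewrite cabs_nat in h1.
apply: (le_trans h1).
have [_ h2] := Ppow_bound (r - i) (Epow_bound i hx).1.
have [_ h3] := Epow_bound i hx.
have hK := Kp_ge0 M0 q.
have g : l2norm (iter (r - i) (opp a p) (iter i Eop x)) <=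
    Num.sqrt MB * mu ^+ (r - i).+1 * Kp M0 q ^+ (r - i) * (d ^+ i * l2norm x).
  apply: (le_trans h2); apply: ler_wpM2l => //.
  by rewrite !mulr_ge0 ?sqrtr_ge0 ?exprn_ge0.
apply: (le_trans (ler_wpM2l (ler0n _ _) g)).
rewrite le_eqVlt; apply/orP; left; apply/eqP.
rewrite -mulr_natl exprMn exprS; ring.
Qed.

End Pow.

Lemma sum_trunc (F : nat -> C) n N : (n <= N)%N -> (forall r, (n <= r)%N -> F r = 0) ->
  \sum_(r < N) F r = \sum_(r < n) F r.
Proof.
move=> hn hF; elim: N hn => [|N IH] hn.
  by rewrite leqn0 in hn; rewrite (eqP hn).
case: (leqP n N) => h; last by have -> : n = N.+1 by apply/eqP; rewrite eqn_leq hn h.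
by rewrite big_ord_recr /= IH // hF // addr0.
Qed.

Lemma telesc (G : nat -> C) n : \sum_(r < n) (G r - G r.+1) = G 0%N - G n.
Proof.
elim: n => [|n IH]; first by rewrite big_ord0 subrr.
by rewrite big_ord_recr /= IH addrA subrK.
Qed.

Lemma geom_le2 (h : R) N : 0 <= h -> h <= 2^-1 -> \sum_(r < N) h ^+ r <= 2.
Proof.
move=> h0 h2; elim: N => [|N IH]; first by rewrite big_ord0.
rewrite big_ord_recl expr0.
have -> : \sum_(i < N) h ^+ (bump 0 i) = h * \sum_(i < N) h ^+ i.
  by rewrite mulr_sumr; apply: eq_bigr => i _; rewrite exprS.
have : h * \sum_(i < N) h ^+ i <= 2^-1 * 2.
  apply: ler_pM => //; apply: sumr_ge0 => i _; exact: exprn_ge0.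
rewrite mulVf ?pnatr_eq0 // => H; have : 1 + h * \sum_(i < N) h ^+ i <= 1 + 1 by rewrite lerD2l.
by [].
Qed.

Lemma lerXn (u v : R) r : 0 <= u -> u <= v -> u ^+ r <= v ^+ r.
Proof.
move=> u0 uv; elim: r => [|r IH]; first by rewrite !expr0.
by rewrite !exprS ler_pM // exprn_ge0.
Qed.

Section Inv.
Variable a : nat -> C.
Hypothesis ha0 : forall n, a n != 0.
Variable M0 : R.
Hypothesis hM : forall n, sqmod (a n) <= M0.
Local Notation T := (wshift a).
Variable A : op R.
Hypothesis hA : in_AT T A.
Variable lam : C.
Hypothesis lam0 : lam != 0.
Variables Cst rho : R.
Hypothesis hC : 0 <= Cst.
Hypothesis hrho : 0 <= rho.
Hypothesis hrl : 2 * rho <= cabs lam.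
Hypothesis hpow : forall r x, l2 x -> l2norm (iter r A x) <= Cst * rho ^+ r * l2norm x.

Definition Bres : op R := fun z m => \sum_(r < m.+1) iter r A z m / lam ^+ r.+1.

Lemma Apow_l2' r x : l2 x -> l2 (iter r A x).
Proof. by move=> hx; elim: r => [|r IH] //=; exact: (S_l2 hA). Qed.

Lemma Apow_lo r x m : l2 x -> (m < r)%N -> iter r A x m = 0.
Proof.
move=> hx; elim: r m => [|r IH] m // hm /=.
apply: (S_vanish hM hA (@Apow_l2' r x hx)) => k hk; apply: IH; lia.
Qed.

Lemma Bres_coord z m N : l2 z -> (m < N)%N ->
  Bres z m = \sum_(r < N) (lam ^+ r.+1)^-1 * iter r A z m.
Proof.
move=> hz hm; rewrite /Bres (@sum_trunc (fun r => (lam ^+ r.+1)^-1 * iter r A z m) m.+1 N) //.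
  by apply: eq_bigr => r _; rewrite mulrC.
by move=> r hr; rewrite Apow_lo ?mulr0.
Qed.

Lemma Bres_bound z : l2 z -> l2 (Bres z) /\ l2norm (Bres z) <= 2 * Cst / cabs lam * l2norm z.
Proof.
move=> hz; have l0 : 0 < cabs lam by exact: cabs_gt0.
apply: l2nb; first by rewrite !mulr_ge0 ?invr_ge0 ?l2norm_ge0 // ltW.
move=> N.
set u := vsum (fun r => vscale (lam ^+ r.+1)^-1 (iter r A z)) N.
have hu : l2 u /\ l2norm u <= \sum_(r < N) l2norm (vscale (lam ^+ r.+1)^-1 (iter r A z)).
  by apply: l2_vsum => r _; exact: (l2_scale _ (@Apow_l2' r z hz)).1.
have e : ps (Bres z) N = ps u N.
  by rewrite /ps; apply: eq_bigr => m _; rewrite (Bres_coord hz (ltn_ord m)).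
rewrite e; apply: (le_trans (ps_le N hu.1)); apply: sq_le; first exact: l2norm_ge0.
apply: (le_trans hu.2).
have -> : 2 * Cst / cabs lam * l2norm z = Cst * l2norm z / cabs lam * 2 by field; rewrite gt_eqF.
have : \sum_(r < N) l2norm (vscale (lam ^+ r.+1)^-1 (iter r A z)) <=
        \sum_(r < N) Cst * l2norm z / cabs lam * (rho / cabs lam) ^+ r.
  apply: ler_sum => r _.
  have [_ h] := l2_scale (lam ^+ r.+1)^-1 (@Apow_l2' r z hz).
  apply: (le_trans h); rewrite cabsV cabsX.
  have := hpow r hz => hp.
  apply: (le_trans (ler_wpM2l _ hp)); first by rewrite invr_ge0 exprn_ge0 // ltW.
  rewrite le_eqVlt; apply/orP; left; apply/eqP.
  rewrite exprS expr_div_n; field.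
  by rewrite expf_neq0 ?gt_eqF.
move=> H; apply: (le_trans H); rewrite -mulr_sumr ler_wpM2l //.
  by rewrite !mulr_ge0 ?invr_ge0 ?l2norm_ge0 // ltW.
apply: geom_le2; first by rewrite divr_ge0 // ltW.
rewrite ler_pdivrMr // mulrC ler_pdivlMr //; by rewrite mulrC.
Qed.

Lemma Apow_lin r (c : C) x y : l2 x -> l2 y ->
  iter r A (fun n => c * x n + y n) = fun n => c * iter r A x n + iter r A y n.
Proof.
move=> hx hy; elim: r => [|r IH] //=.
by rewrite IH (S_lin hA) //; exact: Apow_l2'.
Qed.

Lemma Bres_lin (c : C) x y : l2 x -> l2 y ->
  Bres (fun n => c * x n + y n) = fun n => c * Bres x n + Bres y n.
Proof.
move=> hx hy; apply: funext => m; rewrite /Bres mulr_sumr -big_split.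
apply: eq_bigr => r _; rewrite Apow_lin //=; ring.
Qed.

Lemma A_ext y y' m : l2 y -> l2 y' -> (forall j, (j < m)%N -> y j = y' j) -> A y m = A y' m.
Proof.
move=> hy hy' h; rewrite (S_coord hM hA m hy) (S_coord hM hA m hy').
by apply: eq_bigr => j _; rewrite h.
Qed.

Lemma A_sum (c : nat -> C) (F : nat -> vec R) N : (forall r, l2 (F r)) ->
  A (fun n => \sum_(r < N) c r * F r n) = fun n => \sum_(r < N) c r * A (F r) n.
Proof.
move=> hF; elim: N => [|N IH].
  apply: funext => m; rewrite big_ord0.
  have -> : (fun n => \sum_(r < 0) c r * F r n) = vzero by apply: funext => n; rewrite big_ord0.
  by apply: (S_vanish hM hA l2_zero.1).
have -> : (fun n => \sum_(r < N.+1) c r * F r n) = fun n => c N * F N n + \sum_(r < N) c r * F r n.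
  by apply: funext => n; rewrite big_ord_recr /= addrC.
rewrite (S_lin hA) //.
  by rewrite IH; apply: funext => n; rewrite big_ord_recr /= addrC.
have [h _] := l2_vsum (F := fun r => vscale (c r) (F r)) (n := N) (fun r _ => (l2_scale (c r) (hF r)).1).
exact: h.
Qed.

Lemma Bres_right z : l2 z -> forall m, lam * Bres z m - A (Bres z) m = z m.
Proof.
move=> hz m.
have hB := (Bres_bound hz).1.
set u : vec R := fun n => \sum_(r < m.+1) (lam ^+ r.+1)^-1 * iter r A z n.
have hu : l2 u.
  have [h _] := l2_vsum (F := fun r => vscale (lam ^+ r.+1)^-1 (iter r A z)) (n := m.+1)
     (fun r _ => (l2_scale _ (@Apow_l2' r z hz)).1).
  exact: h.
have -> : A (Bres z) m = A u m.
  apply: A_ext => // j hj; rewrite (Bres_coord (N := m.+1) hz) //; exact: ltnW.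
rewrite /u (@A_sum (fun r => (lam ^+ r.+1)^-1) (fun r => iter r A z) m.+1); last by move=> r; exact: Apow_l2'.
rewrite /= (Bres_coord hz (ltnSn m)) mulr_sumr -sumrB.
have -> : \sum_(i < m.+1) (lam * ((lam ^+ i.+1)^-1 * iter i A z m) - (lam ^+ i.+1)^-1 * A (iter i A z) m)
   = \sum_(i < m.+1) (iter i A z m / lam ^+ i - iter i.+1 A z m / lam ^+ i.+1).
  apply: eq_bigr => i _ /=.
  have li : lam ^+ i != 0 by rewrite expf_neq0.
  rewrite exprS; field; by rewrite li lam0.
have h0 : iter m.+1 A z m = 0 := Apow_lo hz (ltnSn m).
rewrite (telesc (fun i => iter i A z m / lam ^+ i)) h0 mul0r subr0.
by rewrite expr0 invr1 mulr1.
Qed.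

Lemma Bres_left x : l2 x -> Bres (fun n => lam * x n - A x n) = x.
Proof.
move=> hx.
set z : vec R := fun n => lam * x n - A x n.
have hz : l2 z by apply: l2_vsub; [exact: (l2_scale lam hx).1 | exact: (S_l2 hA)].
set y := Bres z.
have hy : l2 y := (Bres_bound hz).1.
have ey := Bres_right hz.
apply: funext; elim/ltn_ind => m IH.
have eA : A y m = A x m by apply: A_ext => // j hj; exact: IH.
have := ey m; rewrite /z eA => /addIr; exact: mulfI.
Qed.

Lemma A_invertible : op_invertible (fun x n => lam * x n - A x n).
Proof.
exists Bres; split.
  split.
  - by move=> z hz; exact: (Bres_bound hz).1.
  - by move=> c x y hx hy; exact: Bres_lin.
  - by exists (2 * Cst / cabs lam) => z hz; exact: (Bres_bound hz).2.
move=> x hx; split; first exact: Bres_left.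
by apply: funext => m; exact: (Bres_right hx).
Qed.

End Inv.
End S.



Lemma part1 (R : realType) (a : nat -> R[i]) (ha0 : forall n, a n != 0) (M0 : R)
  (hM : forall n, sqmod (a n) <= M0) (S1 S2 : op R) :
     in_AT (wshift a) S1 -> in_AT (wshift a) S2 ->
     ~ op_zero S1 -> ~ op_zero S2 -> ~ op_zero (op_mul S1 S2).
Proof.
move=> h1 h2 n1 n2 hz.
have [k1 [c1 m1]] := S_nonzero ha0 hM h1 n1.
have [k2 [c2 m2]] := S_nonzero ha0 hM h2 n2.
have hev : l2 (ev R 0) by exact: (l2_ev R 0).1.
have hv0 : forall i, (i < 0)%N -> ev R 0 i = 0 by [].
have hv1 : ev R 0 0 != 0 by rewrite /ev eqxx oner_neq0.
have [z2 nz2] := S_key ha0 hM h2 c2 m2 hev hv0 hv1.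
rewrite add0n in z2 nz2.
have [_ nz1] := S_key ha0 hM h1 c1 m1 (j := k2) (S_l2 h2 hev) z2 nz2.
move/negP: nz1; apply; apply/eqP.
by have := hz _ hev; rewrite /op_mul => ->.
Qed.

Lemma part_nil (R : realType) (a : nat -> R[i]) (ha0 : forall n, a n != 0) (M0 : R)
  (hM : forall n, sqmod (a n) <= M0) (A : op R) :
  in_AT (wshift a) A -> ~ op_zero A -> ~ nilpotent A.
Proof.
move=> hA nA [k hk].
have [k0 [c0 m0]] := S_nonzero ha0 hM hA nA.
have H : forall i, [/\ l2 (iter i A (ev R 0)),
   (forall m, (m < i * k0)%N -> iter i A (ev R 0) m = 0) &
   iter i A (ev R 0) (i * k0)%N != 0].
  elim => [|i [l1 l2' l3]].
    split => //; first exact: (l2_ev R 0).1.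
    by rewrite mul0n /ev ?eqxx /= oner_neq0.
  have [z nz] := S_key ha0 hM hA c0 m0 l1 l2' l3.
  split => /=; first exact: (S_l2 hA l1).
    by move=> m; rewrite mulSn addnC; exact: z.
  by rewrite mulSn addnC.
have [hl _ hnz] := H k.+1.
move/negP: hnz; apply; apply/eqP; by rewrite (hk _ (l2_ev R 0).1).
Qed.

Lemma part_qn (R : realType) (a : nat -> R[i]) (ha0 : forall n, a n != 0) (M0 : R)
  (hM : forall n, sqmod (a n) <= M0) (qT : quasinilpotent (wshift a)) (A : op R) :
  in_AT (wshift a) A -> quasinilpotent A.
Proof.
move=> hA lam lam0.
set l := cabs lam.
have l0 : 0 < l := cabs_gt0 lam0.
have d0 : 0 < l / 4 by rewrite divr_gt0.
have [p [hp0 hpE]] := hA.2 (l / 4) d0.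
set q : {poly R[i]} := \poly_(i < size p) p`_i.+1.
have hpq : p = 'X * q.
  apply/polyP => i; rewrite coefXM /q coef_poly.
  case: i => [|i] /=; first by rewrite -horner_coef0 hp0.
  case: ltnP => h //; rewrite nth_default //; exact: leqW.
set K := Kp M0 q.
have K0 : 0 <= K := Kp_ge0 M0 q.
set mu := l / (4 * (K + 1)).
have K1 : 0 < 4 * (K + 1) by rewrite mulr_gt0 // ltr_pwDr.
have mu0 : 0 < mu by rewrite divr_gt0.
have [MB [MB0 hW]] := w_res qT mu0.
have hmk : mu * K + l / 4 <= l / 2.
  have e : mu * (4 * (K + 1)) = l by rewrite /mu divfK // gt_eqF.
  have f : 0 <= mu by exact: ltW.
  clearbody mu; nra.
have hpow : forall r x, l2 x -> l2norm (iter r A x) <= (Num.sqrt MB * mu) * (l / 2) ^+ r * l2norm x.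
  move=> r x hx.
  have := Apow_bound ha0 hM hA hpE (ltW d0) hpq MB0 (ltW mu0) hW r hx.
  move=> h; apply: (le_trans h).
  rewrite mulrAC; apply: ler_wpM2r; first exact: l2norm_ge0.
  apply: ler_wpM2l; first by apply: mulr_ge0; [exact: sqrtr_ge0 | exact: ltW].
  apply: lerXn => //; apply: addr_ge0; [exact: mulr_ge0 (ltW mu0) K0 | exact: ltW].
apply: (A_invertible hM hA lam0 (Cst := Num.sqrt MB * mu) (rho := l / 2)) => //.
- by apply: mulr_ge0; [exact: sqrtr_ge0 | exact: ltW].
- by apply: divr_ge0 => //; exact: ltW.
- by rewrite /l mulrC divfK.
Qed.

Unset Implicit Arguments.
Set Strict Implicit.

Theorem mainTheorem14 (R : realType) (a : nat -> R[i])
  (ha0 : forall n, a n != 0)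
  (hab : exists M : R, forall n, sqmod (a n) <= M) :
  (forall S1 S2 : op R,
     in_AT (wshift a) S1 -> in_AT (wshift a) S2 ->
     ~ op_zero S1 -> ~ op_zero S2 -> ~ op_zero (op_mul S1 S2)) /\
  (quasinilpotent (wshift a) ->
     forall A : op R, in_AT (wshift a) A -> ~ op_zero A ->
       quasinilpotent A /\ ~ nilpotent A).
Proof.
have [M0 hM] := hab.
split; first by move=> S1 S2 h1 h2 n1 n2; exact: (part1 ha0 hM h1 h2 n1 n2).
move=> qT A hA nA; split; first exact: (part_qn ha0 hM qT hA).
exact: (part_nil ha0 hM hA nA).
Qed.
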